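(* For any $k\ge1$ and any $k$-dimensional convex polytope $P$ that has an insphere, letting $x$ be the radius of the insphere, for every integer $n\ge1$ we have $Disp(n;P)=\frac{2x\,DP(n;P)}{x+DP(n;P)}$.
   Context: A $k$-dimensional convex polytope has an insphere if the largest ball contained in $P$ is tangent to all facets of $P$. Distances are Euclidean. $Disp(n;P)=\max_{X_1,\dots,X_n\in P}\min\{dis(X_i,\partial P),dis(X_i,X_j):i\ne j\}$. For $r\ge0$, $Pack(r;P)$ is the maximum number of pairwise non-overlapping balls of radius $r$ contained in $P$, and $DP(n;P)=\max\{r:Pack(r;P)\ge n\}$. *)

(* Defs.v *)
From HB Require Import structures.
From mathcomp Require Import all_boot all_order all_algebra.
From mathcomp Require Import classical_sets reals.
Set Implicit Arguments. Unset Strict Implicit. Unset Printing Implicit Defensive.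
Import Order.TTheory GRing.Theory Num.Theory.
Local Open Scope ring_scope.
Local Open Scope classical_set_scope.

Section Defs.
Variables (R : realType) (k : nat).
Local Notation vec := 'rV[R]_k.

Definition dot (u v : vec) : R := \sum_(i < k) u 0 i * v 0 i.
Definition edist (u v : vec) : R := Num.sqrt (\sum_(i < k) (u 0 i - v 0 i) ^+ 2).

Definition cball (c : vec) (r : R) : set vec := [set y | edist c y <= r].
Definition oball (c : vec) (r : R) : set vec := [set y | edist c y < r].

Definition einterior (P : set vec) : set vec :=
  [set y | exists e : R, 0 < e /\ oball y e `<=` P].
Definition eclosure (P : set vec) : set vec :=
  [set y | forall e : R, 0 < e -> exists z, P z /\ edist y z < e].
Definition eboundary (P : set vec) : set vec := eclosure P `\` einterior P.

Definition dist_set (X : vec) (S : set vec) : R := inf [set edist X y | y in S].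

Definition halfspace (a : vec) (b : R) : set vec := [set y | dot a y <= b].
Definition hyperplane (a : vec) (b : R) : set vec := [set y | dot a y = b].

Definition bounded_set (P : set vec) : Prop :=
  exists M : R, forall y, P y -> edist 0 y <= M.

Definition is_kpolytope (P : set vec) : Prop :=
  [/\ exists (m : nat) (a : 'I_m -> vec) (b : 'I_m -> R),
        P = [set y | forall j, dot (a j) y <= b j],
      bounded_set P & einterior P !=set0].

Definition affdim_ge_km1 (F : set vec) : Prop :=
  exists (p0 : vec) (q : 'I_k.-1 -> vec),
    [/\ F p0, (forall i, F (p0 + q i)) & row_free (\matrix_(i < k.-1) q i)].

Definition facet (P F : set vec) : Prop :=
  exists (a : vec) (b : R), [/\ a != 0, P `<=` halfspace a b,
    F = P `&` hyperplane a b & affdim_ge_km1 F].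

(* P has an insphere of radius x: the largest ball contained in P has
   radius x and is tangent to (touches) every facet of P *)
Definition has_insphere (P : set vec) (x : R) : Prop :=
  exists c : vec, [/\ cball c x `<=` P,
    (forall (c' : vec) (r : R), 0 <= r -> cball c' r `<=` P -> r <= x) &
    (forall F, facet P F -> cball c x `&` F !=set0)].

Definition minsep (P : set vec) (n : nat) (X : 'I_n -> vec) : R :=
  inf ([set d | exists i, d = dist_set (X i) (eboundary P)] `|`
       [set d | exists i j, i != j /\ d = edist (X i) (X j)]).

Definition Disp (n : nat) (P : set vec) : R :=
  sup [set d | exists X : 'I_n -> vec, (forall i, P (X i)) /\ d = minsep P X].

(* Pack(r;P) >= n : there are n pairwise non-overlapping balls of radius r
   contained in P (non-overlapping = disjoint interiors) *)
Definition Pack_ge (r : R) (P : set vec) (n : nat) : Prop :=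
  exists c : 'I_n -> vec, (forall i, cball (c i) r `<=` P) /\
    (forall i j, i != j -> oball (c i) r `&` oball (c j) r = set0).

Definition DP (n : nat) (P : set vec) : R :=
  sup [set r | 0 <= r /\ Pack_ge r P n].

End Defs.

(* Main.v *)
Require Import Defs.
From mathcomp Require Import all_boot all_order all_algebra.
From mathcomp Require Import classical_sets reals.
From mathcomp Require Import ring lra.
From Stdlib Require Import Classical.
Import Order.TTheory GRing.Theory Num.Theory.
Local Open Scope ring_scope.
Local Open Scope classical_set_scope.
Set Implicit Arguments. Unset Strict Implicit. Unset Printing Implicit Defensive.

Section Eucl.
Variables (R : realType) (k : nat).
Local Notation vec := 'rV[R]_k.
Implicit Types u v w : vec.

Definition nrm v := Num.sqrt (dot v v).

Lemma dotC u v : dot u v = dot v u.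
Proof. by apply: eq_bigr => i _; rewrite mulrC. Qed.

Lemma dotDl u v w : dot (u + v) w = dot u w + dot v w.
Proof. rewrite /dot -big_split; apply: eq_bigr => i _; by rewrite mxE mulrDl. Qed.

Lemma dotDr u v w : dot w (u + v) = dot w u + dot w v.
Proof. by rewrite dotC dotDl !(dotC w). Qed.

Lemma dotZl (t : R) u v : dot (t *: u) v = t * dot u v.
Proof. rewrite /dot mulr_sumr; apply: eq_bigr => i _; by rewrite mxE mulrA. Qed.

Lemma dotZr (t : R) u v : dot u (t *: v) = t * dot u v.
Proof. by rewrite dotC dotZl dotC. Qed.

Lemma dotNl u v : dot (- u) v = - dot u v.
Proof. by rewrite -scaleN1r dotZl mulN1r. Qed.

Lemma dotNr u v : dot u (- v) = - dot u v.
Proof. by rewrite dotC dotNl dotC. Qed.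

Lemma dotBl u v w : dot (u - v) w = dot u w - dot v w.
Proof. by rewrite dotDl dotNl. Qed.

Lemma dotBr u v w : dot w (u - v) = dot w u - dot w v.
Proof. by rewrite dotDr dotNr. Qed.

Lemma dot0l v : dot 0 v = 0.
Proof. by rewrite /dot big1 // => i _; rewrite mxE mul0r. Qed.

Lemma dot0r v : dot v 0 = 0.
Proof. by rewrite dotC dot0l. Qed.

Lemma dot_ge0 v : 0 <= dot v v.
Proof. by apply: sumr_ge0 => i _; rewrite -expr2 sqr_ge0. Qed.

Lemma dot_eq0 v : dot v v = 0 -> v = 0.
Proof.
move=> h; apply/rowP => i; rewrite mxE.
have := psumr_eq0P (P := predT) (F := fun i => v 0 i * v 0 i) _ h.
move=> /(_ (fun i _ => ltac:(by rewrite -expr2 sqr_ge0)) i isT) /eqP; rewrite mulf_eq0 orbb => /eqP ->.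
by [] || by rewrite mxE.
Qed.

Lemma edistE u v : edist u v = nrm (u - v).
Proof. rewrite /edist /nrm /dot; congr Num.sqrt; apply: eq_bigr => i _; by rewrite !mxE expr2. Qed.

Lemma nrm_ge0 v : 0 <= nrm v.
Proof. exact: sqrtr_ge0. Qed.

Lemma nrm_sq v : nrm v ^+ 2 = dot v v.
Proof. by rewrite sqr_sqrtr // dot_ge0. Qed.

Lemma nrmZ (t : R) v : nrm (t *: v) = `|t| * nrm v.
Proof. by rewrite /nrm dotZl dotZr mulrA -expr2 sqrtrM ?sqr_ge0 // sqrtr_sqr. Qed.

Lemma nrmN v : nrm (- v) = nrm v.
Proof. by rewrite /nrm dotNl dotNr opprK. Qed.

Lemma nrm0 : nrm 0 = 0.
Proof. by rewrite /nrm dot0l sqrtr0. Qed.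

Lemma nrm_eq0 v : nrm v = 0 -> v = 0.
Proof. move=> /eqP; rewrite sqrtr_eq0 => h; apply: dot_eq0; apply/eqP; by rewrite eq_le h dot_ge0. Qed.

Lemma nrm_gt0 v : v != 0 -> 0 < nrm v.
Proof. move=> hv; rewrite lt_neqAle nrm_ge0 andbT eq_sym; apply/eqP => /nrm_eq0 h; by rewrite h eqxx in hv. Qed.

Lemma CS u v : dot u v <= nrm u * nrm v.
Proof.
have [u0|] := eqVneq u 0; first by rewrite u0 dot0l nrm0 mul0r.
move=> /nrm_gt0; rewrite /nrm sqrtr_gt0 => dpos.
set d := dot u u in dpos *.
have h : 0 <= dot (d *: v - (dot u v) *: u) (d *: v - (dot u v) *: u) by exact: dot_ge0.
rewrite !dotBl !dotBr !dotZl !dotZr (dotC v u) -/d in h.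
have h2 : dot u v ^+ 2 <= d * dot v v.
  have : 0 <= d * (d * dot v v - dot u v ^+ 2) by nra.
  by rewrite pmulr_rge0 // subr_ge0.
have e1 : Num.sqrt (dot u v ^+ 2) <= Num.sqrt (d * dot v v) by apply: ler_wsqrtr.
rewrite sqrtr_sqr (sqrtrM _ (ltW dpos)) in e1.
by apply: le_trans (ler_norm _) e1.
Qed.

Lemma nrm_tri u v : nrm (u + v) <= nrm u + nrm v.
Proof.
have h := CS u v.
have e : dot (u + v) (u + v) <= (nrm u + nrm v) ^+ 2.
  rewrite !dotDl !dotDr (dotC v u) sqrrD -!nrm_sq; nra.
rewrite /nrm; apply: le_trans (ler_wsqrtr e) _.
by rewrite sqrtr_sqr ger0_norm // addr_ge0 // nrm_ge0.
Qed.

Lemma edist_ge0 u v : 0 <= edist u v.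
Proof. exact: sqrtr_ge0. Qed.

Lemma edist_sym u v : edist u v = edist v u.
Proof. by rewrite !edistE -nrmN opprB. Qed.

Lemma edist_xx u : edist u u = 0.
Proof. by rewrite edistE subrr nrm0. Qed.

Lemma edist_tri u v w : edist u w <= edist u v + edist v w.
Proof. rewrite !edistE; have -> : u - w = (u - v) + (v - w) by rewrite addrA subrK. exact: nrm_tri. Qed.

Lemma edist_add u w : edist u (u + w) = nrm w.
Proof. by rewrite edistE opprD addrA subrr add0r nrmN. Qed.

Lemma edist_scale (c u v : vec) (t : R) :
  edist (c + t *: (u - c)) (c + t *: (v - c)) = `|t| * edist u v.
Proof.
rewrite !edistE -nrmZ; congr nrm.
by rewrite opprD addrACA subrr add0r -scalerBr opprB addrA subrK.
Qed.

Lemma CS_abs u v : `|dot u v| <= nrm u * nrm v.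
Proof.
case: (lerP 0 (dot u v)) => h; first by rewrite ger0_norm // CS.
by rewrite ltr0_norm // -dotNl -(nrmN u) CS.
Qed.


Lemma dot_mul u v : dot u v = (u *m v^T) 0 0.
Proof. rewrite /dot !mxE; apply: eq_bigr => i _; by rewrite !mxE. Qed.

Lemma ortho_basis (v : vec) : v != 0 ->
  exists B : 'M[R]_(k.-1, k), row_free B /\ forall i, dot v (row i B) = 0.
Proof.
move=> v0.
set K := kermx v^T.
have rK : \rank K = k.-1 by rewrite mxrank_ker mxrank_tr rank_rV v0 subn1.
exists (castmx (rK, erefl) (row_base K)); split.
  by rewrite row_free_castmx row_base_free.
move=> i.
have sub : (castmx (rK, erefl) (row_base K) <= K)%MS.
  by rewrite (eqmx_cast _ (rK, erefl)) eq_row_base.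
move/sub_kermxP: sub => /(congr1 (row i)); rewrite row_mul row0 => h.
rewrite dotC dot_mul.
have -> : (row i (castmx (rK, erefl) (row_base K)) *m v^T) = 0 by [].
by rewrite mxE.
Qed.

End Eucl.

Section Disj.
Variables (R : realType) (k : nat).
Local Notation vec := 'rV[R]_k.

Lemma oball_disj (u v : vec) r : oball u r `&` oball v r = set0 -> 2 * r <= edist u v.
Proof.
move=> h; rewrite leNgt; apply/negP => huv.
pose mid := u + 2^-1 *: (v - u).
have e1 : edist u mid = 2^-1 * edist u v.
  by rewrite /mid edist_add nrmZ ger0_norm ?invr_ge0 ?ler0n // -nrmN opprB -edistE.
have e2 : edist v mid = 2^-1 * edist u v.
  rewrite edistE.
  have -> : v - mid = 2^-1 *: (v - u).
    rewrite /mid opprD addrA.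
    have -> : v - u - 2^-1 *: (v - u) = (1 - 2^-1) *: (v - u) by rewrite scalerBl scale1r.
    by congr (_ *: _); field.
  by rewrite nrmZ ger0_norm ?invr_ge0 ?ler0n // -nrmN opprB -edistE.
have : (oball u r `&` oball v r) mid.
  rewrite /oball /=; split; rewrite ?e1 ?e2; lra.
by rewrite h.
Qed.

Lemma disj_oball (u v : vec) r : 2 * r <= edist u v -> oball u r `&` oball v r = set0.
Proof.
move=> h; apply/seteqP; split => // z [h1 h2].
rewrite /oball /= in h1 h2; rewrite edist_sym in h2.
have := edist_tri u z v; lra.
Qed.

End Disj.

Section Poly.
Variables (R : realType) (k : nat) (m : nat).
Local Notation vec := 'rV[R]_k.
Variables (a : 'I_m -> vec) (b : 'I_m -> R) (c : vec) (x : R).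
Let P : set vec := [set y | forall j, dot (a j) y <= b j].
Hypothesis hx : 0 < x.
Hypothesis hball : cball c x `<=` P.
Hypothesis hfac : forall F, facet P F -> cball c x `&` F !=set0.

Lemma ball_slack (y : vec) (r : R) j : 0 <= r -> cball y r `<=` P -> a j != 0 ->
  dot (a j) y + r * nrm (a j) <= b j.
Proof.
move=> r0 hb aj.
have np := nrm_gt0 aj.
have : P (y + (r / nrm (a j)) *: a j).
  apply: hb; rewrite /cball /= edist_add nrmZ ger0_norm ?(divr_ge0 r0 (ltW np)) //.
  by rewrite divfK ?gt_eqF.
move=> /(_ j); rewrite dotDr dotZr -nrm_sq.
by rewrite expr2 mulrA divfK ?gt_eqF.
Qed.

Lemma Pc : P c.
Proof. apply: hball; by rewrite /cball /= edist_xx ltW. Qed.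

Lemma zero_ok j y : a j = 0 -> dot (a j) y <= b j.
Proof. move=> aj; have := Pc j; by rewrite aj !dot0l. Qed.

Definition J j := (a j != 0) && (b j - dot (a j) c == x * nrm (a j)).

Lemma slack j : a j != 0 -> x * nrm (a j) <= b j - dot (a j) c.
Proof. move=> aj; have := ball_slack (ltW hx) hball aj; by rewrite -lerBrDl. Qed.


Definition Phi (S : {set 'I_m}) :=
  forall z, (forall l, J l || (l \in S) -> dot (a l) z <= b l) -> P z.

Lemma facet_J j (S : {set 'I_m}) (w : vec) : Phi S ->
  a j != 0 -> b j < dot (a j) w ->
  (forall l, l != j -> J l || (l \in S) -> dot (a l) w <= b l) ->
  J j.
Proof.
move=> hS aj jw hw.
have np := nrm_gt0 aj.
have sj := slack aj.
have acj : dot (a j) c < b j.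
  have : 0 < x * nrm (a j) by rewrite mulr_gt0.
  lra.
set tau := (b j - dot (a j) c) / (dot (a j) w - dot (a j) c).
have den : 0 < dot (a j) w - dot (a j) c by lra.
have tau0 : 0 < tau by rewrite divr_gt0 // subr_gt0.
have tau1 : tau < 1 by rewrite ltr_pdivrMr // mul1r; lra.
set p := c + tau *: (w - c).
have dotp l : dot (a l) p = dot (a l) c + tau * (dot (a l) w - dot (a l) c).
  by rewrite /p dotDr dotZr dotBr.
have pj : dot (a j) p = b j.
  by rewrite dotp /tau divfK ?gt_eqF // addrC subrK.
have pl l : l != j -> J l || (l \in S) -> a l != 0 -> dot (a l) p < b l.
  move=> lj hl al.
  have hlw := hw l lj hl.
  have sl := slack al.
  have nl := nrm_gt0 al.
  have acl : dot (a l) c < b l.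
    have : 0 < x * nrm (a l) by rewrite mulr_gt0.
    lra.
  rewrite dotp.
  have : tau * (dot (a l) w - b l) <= 0 by rewrite pmulr_rle0 // subr_le0.
  have : 0 < (1 - tau) * (b l - dot (a l) c) by rewrite mulr_gt0 // subr_gt0.
  nra.
have [B [Bfree Borth]] := ortho_basis aj.
pose rel l := (a l != 0) && (l != j) && (J l || (l \in S)).
pose delta l := if rel l then b l - dot (a l) p else 1.
have delta0 l : 0 < delta l.
  rewrite /delta; case: ifP => // /andP [/andP [al lj] hl].
  by rewrite subr_gt0 pl.
pose T (li : 'I_m * 'I_k.-1) := `|dot (a li.1) (row li.2 B)| / delta li.1.
pose Sig := \sum_li T li.
have T0 li : 0 <= T li by rewrite divr_ge0 ?normr_ge0 ?ltW.
have Sig0 : 0 <= Sig by apply: sumr_ge0 => li _.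
pose eps := (1 + Sig)^-1.
have eps0 : 0 < eps by rewrite invr_gt0; lra.
have key l i : eps * `|dot (a l) (row i B)| <= delta l.
  have TS : T (l, i) <= 1 + Sig.
    rewrite /Sig (bigD1 (l, i)) //=.
    have : 0 <= \sum_(li | li != (l, i)) T li by apply: sumr_ge0.
    lra.
  have eT : `|dot (a l) (row i B)| = T (l, i) * delta l.
    by rewrite /T /= divfK // gt_eqF.
  have e1 : eps * (1 + Sig) = 1 by rewrite mulVf // gt_eqF //; lra.
  rewrite eT.
  have := delta0 l.
  have TS' : 0 <= 1 + Sig - T (l, i) by rewrite subr_ge0.
  have := mulr_ge0 TS' (mulr_ge0 (ltW eps0) (ltW (delta0 l))).
  nra.
have Pp : P p.
  apply: hS => l hl.
  have [->|lj] := eqVneq l j; first by rewrite pj.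
  have [al|al] := eqVneq (a l) 0; first exact: zero_ok.
  by apply: ltW; apply: pl.
have Pq i : P (p + eps *: row i B).
  apply: hS => l hl.
  rewrite dotDr dotZr.
  have [->|lj] := eqVneq l j; first by rewrite pj Borth mulr0 addr0.
  have [al|al] := eqVneq (a l) 0; first by have := zero_ok p al; rewrite al !dot0l mulr0 addr0.
  have := key l i.
  rewrite /delta /rel al lj hl /=.
  have := ler_norm (dot (a l) (row i B)).
  have := ltW eps0.
  nra.
have fac : facet P (P `&` hyperplane (a j) (b j)).
  exists (a j), (b j); split => //.
    by move=> y hy; exact: hy j.
  exists p, (fun i => eps *: row i B); split.
  - by split.
  - move=> i; split; first exact: Pq.
    by rewrite /hyperplane /= dotDr dotZr Borth mulr0 addr0.
  - have -> : \matrix_(i < k.-1) (eps *: row i B) = eps *: B.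
      by apply/matrixP => i l; rewrite !mxE.
    by rewrite /row_free mxrank_scale_nz // gt_eqF.
have [q [hq [_ qj]]] := hfac fac.
rewrite /cball /= in hq.
rewrite /hyperplane /= in qj.
have h1 : b j - dot (a j) c <= nrm (a j) * nrm (q - c).
  by rewrite -qj -dotBr CS.
have h2 : nrm (q - c) <= x by rewrite -nrmN opprB -edistE.
rewrite /J aj /=; apply/eqP; apply: le_anti; rewrite sj andbT.
have := ler_wpM2l (ltW np) h2.
lra.
Qed.


Lemma Phi_ind n (S : {set 'I_m}) : (#|S| <= n)%N -> Phi S -> Phi finset.set0.
Proof.
elim: n S => [|n IH] S hS PS.
  by move: hS; rewrite leqn0 cards_eq0 => /eqP <-.
have [S0|] := eqVneq S finset.set0; first by rewrite -S0.
case/finset.set0Pn => j jS.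
case: (classic (Phi (S :\ j))) => hj.
  apply: (IH (S :\ j)) => //.
  by move: hS; rewrite (cardsD1 j S) jS add1n ltnS.
have [z hz] := not_all_ex_not _ _ hj.
have [hz1 hz2] := imply_to_and _ _ hz.
have jz : b j < dot (a j) z.
  rewrite ltNge; apply/negP => jz; apply: hz2; apply: PS => l hl.
  have [->|lj] := eqVneq l j; first by [].
  apply: hz1; case/orP: hl => [->//|lS]; by rewrite finset.in_setD1 lj lS orbT.
have aj : a j != 0.
  apply/eqP => aj; have := zero_ok z aj; lra.
have Jj : J j.
  apply: (facet_J PS aj jz) => l lj hl; apply: hz1.
  case/orP: hl => [->//|lS]; by rewrite finset.in_setD1 lj lS orbT.
have := hz1 j; rewrite Jj => /(_ isT); lra.
Qed.

Lemma P_eq z : (forall j, J j -> dot (a j) z <= b j) -> P z.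
Proof.
move=> hz.
have h0 : Phi finset.set0.
  apply: (@Phi_ind _ [set: 'I_m] (leqnn _)).
  by move=> y hy l; apply: hy; rewrite finset.in_setT orbT.
by apply: h0 => l; rewrite finset.in_set0 orbF; exact: hz.
Qed.

Definition inner y r := forall j, J j -> dot (a j) y + r * nrm (a j) <= b j.

Lemma J_nz j : J j -> a j != 0.
Proof. by case/andP. Qed.

Lemma J_eq j : J j -> b j - dot (a j) c = x * nrm (a j).
Proof. by case/andP => _ /eqP. Qed.

Lemma inner_P y : inner y 0 -> P y.
Proof. move=> h; apply: P_eq => j /h; by rewrite mul0r addr0. Qed.

Lemma P_inner y : P y -> inner y 0.
Proof. move=> h j _; by rewrite mul0r addr0. Qed.

Lemma ball_inner y r : 0 <= r -> cball y r `<=` P -> inner y r.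
Proof. move=> r0 hb j /J_nz aj; exact: ball_slack. Qed.

Lemma inner_ball y r : inner y r -> cball y r `<=` P.
Proof.
move=> h z hz; apply: P_eq => j Jj.
have := h j Jj.
have e : dot (a j) z = dot (a j) y + dot (a j) (z - y) by rewrite dotBr addrC subrK.
have h1 := CS (a j) (z - y).
have h2 : nrm (z - y) <= r by rewrite -(edist_add y) addrC subrK.
have := ler_wpM2l (nrm_ge0 (a j)) h2.
rewrite e; lra.
Qed.

Lemma inner_mono y r r' : r' <= r -> inner y r -> inner y r'.
Proof.
move=> rr h j Jj; have := h j Jj.
have := ler_wpM2r (nrm_ge0 (a j)) rr; lra.
Qed.

Lemma inner_scale y r t : 0 <= t -> inner y r ->
  inner (c + t *: (y - c)) ((1 - t) * x + t * r).
Proof.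
move=> t0 h j Jj; have := h j Jj; have := J_eq Jj.
rewrite dotDr dotZr dotBr => e1 e2.
have := ler_wpM2l t0 e2.
nra.
Qed.

Lemma notint q j : a j != 0 -> dot (a j) q = b j -> ~ einterior P q.
Proof.
move=> aj qj [e [e0 he]].
have np := nrm_gt0 aj.
have : P (q + (e / 2 / nrm (a j)) *: a j).
  apply: he; rewrite /oball /= edist_add nrmZ ger0_norm; last first.
    by apply: divr_ge0; [lra | exact: ltW].
  rewrite divfK ?gt_eqF //; lra.
move=> /(_ j); rewrite dotDr dotZr -nrm_sq expr2 mulrA divfK ?gt_eqF // qj.
have : 0 < e / 2 * nrm (a j) by rewrite mulr_gt0 //; lra.
lra.
Qed.

Lemma J_bd j : J j -> eboundary P (c + (x / nrm (a j)) *: a j).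
Proof.
move=> Jj.
have aj := J_nz Jj; have np := nrm_gt0 aj.
have e : dot (a j) (c + (x / nrm (a j)) *: a j) = b j.
  rewrite dotDr dotZr -nrm_sq expr2 mulrA divfK ?gt_eqF //.
  have := J_eq Jj; lra.
split; last exact: (notint aj e).
move=> eps eps0; exists (c + (x / nrm (a j)) *: a j); split; last by rewrite edist_xx.
apply: hball; rewrite /cball /= edist_add nrmZ ger0_norm ?divfK ?gt_eqF //.
by apply: divr_ge0; apply: ltW.
Qed.

Lemma dist_ge y r : (exists j, J j) -> 0 <= r -> inner y r ->
  r <= dist_set y (eboundary P).
Proof.
move=> [j Jj] r0 h.
apply: lb_le_inf.
  by exists (edist y (c + (x / nrm (a j)) *: a j)); exists (c + (x / nrm (a j)) *: a j) => //; exact: J_bd.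
move=> d [q [_ qint] <-].
rewrite leNgt; apply/negP => hq; apply: qint.
exists (r - edist y q); split; first by rewrite subr_gt0.
move=> z hz; apply: (inner_ball h).
rewrite /cball /=; have := edist_tri y q z; rewrite /oball /= in hz; lra.
Qed.

Lemma dist_ge0 y : (exists j, J j) -> 0 <= dist_set y (eboundary P).
Proof.
move=> [j Jj]; apply: lb_le_inf.
  by exists (edist y (c + (x / nrm (a j)) *: a j)); exists (c + (x / nrm (a j)) *: a j) => //; exact: J_bd.
move=> d [q _ <-]; exact: edist_ge0.
Qed.

Lemma dist_lb y q : eboundary P q -> dist_set y (eboundary P) <= edist y q.
Proof.
move=> hq; apply: ge_inf; last by exists q.
by exists 0 => d [q' _ <-]; exact: edist_ge0.
Qed.

Lemma dist_le y r : P y -> r <= dist_set y (eboundary P) -> inner y r.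
Proof.
move=> Py hr; apply: NNPP => hn.
have [j0 hj0] := not_all_ex_not _ _ hn.
have [Jj0 hj0'] := imply_to_and _ _ hj0.
have {hj0'} hj0' : b j0 < dot (a j0) y + r * nrm (a j0) by rewrite ltNge; apply/negP.
pose sigma j := (b j - dot (a j) y) / nrm (a j).
case: (arg_minP sigma Jj0) => j1 Jj1 hmin.
set s := sigma j1.
have aj1 := J_nz Jj1; have n1 := nrm_gt0 aj1.
have aj0 := J_nz Jj0; have n0 := nrm_gt0 aj0.
have s0 : 0 <= s by rewrite divr_ge0 ?subr_ge0 ?Py // ltW.
have sr : s < r.
  have := hmin j0 Jj0; rewrite -/s /sigma => hs.
  have : (b j0 - dot (a j0) y) / nrm (a j0) < r.
    by rewrite ltr_pdivrMr //; lra.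
  lra.
have ins : inner y s.
  move=> j Jj; have := hmin j Jj; rewrite -/s /sigma => hs.
  have nj := nrm_gt0 (J_nz Jj).
  by rewrite -lerBrDl -ler_pdivlMr.
set q := y + (s / nrm (a j1)) *: a j1.
have eq1 : edist y q = s by rewrite edist_add nrmZ ger0_norm ?divfK ?gt_eqF // divr_ge0 // ltW.
have Pq : P q by apply: (inner_ball ins); rewrite /cball /= eq1.
have qj : dot (a j1) q = b j1.
  by rewrite dotDr dotZr -nrm_sq expr2 mulrA divfK ?gt_eqF // /s /sigma divfK ?gt_eqF //; lra.
have bq : eboundary P q.
  split; last exact: (notint aj1 qj).
  by move=> e e0; exists q; split; last by rewrite edist_xx.
have := dist_lb y bq; rewrite eq1; lra.
Qed.

Lemma J_exists : bounded_set P -> (0 < k)%N -> exists j, J j.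
Proof.
move=> [M hM] hk; apply: NNPP => hn.
have allP : forall z, P z.
  move=> z; apply: P_eq => j Jj; exfalso; apply: hn; by exists j.
pose v : vec := const_mx 1.
have v0 : v != 0.
  apply/eqP => /rowP /(_ (Ordinal hk)); rewrite !mxE => /eqP; by rewrite oner_eq0.
have nv := nrm_gt0 v0.
have := hM _ (allP (((`|M| + 1) / nrm v) *: v)).
rewrite -[X in edist 0 X]add0r edist_add nrmZ ger0_norm ?divfK ?gt_eqF //; last first.
  by apply: divr_ge0; [have := normr_ge0 M; lra | exact: ltW].
have := ler_norm M; lra.
Qed.

Hypothesis hmax : forall (c' : vec) (r : R), 0 <= r -> cball c' r `<=` P -> r <= x.
Hypothesis hJ : exists j, J j.
Variable n : nat.
Hypothesis hn : (0 < n)%N.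

Let i0 : 'I_n := Ordinal hn.

Lemma minsep_ge (X : 'I_n -> vec) d : (forall i, d <= dist_set (X i) (eboundary P)) ->
  (forall i j, i != j -> d <= edist (X i) (X j)) -> d <= minsep P X.
Proof.
move=> h1 h2; apply: lb_le_inf.
  by exists (dist_set (X i0) (eboundary P)); left; exists i0.
by move=> e [[i ->]|[i [j [ij ->]]]]; [exact: h1 | exact: h2].
Qed.

Lemma minsep_lb (X : 'I_n -> vec) : has_lbound ([set d | exists i, d = dist_set (X i) (eboundary P)] `|`
       [set d | exists i j, i != j /\ d = edist (X i) (X j)]).
Proof.
exists 0 => e [[i ->]|[i [j [ij ->]]]]; [exact: dist_ge0 | exact: edist_ge0].
Qed.

Lemma minsep_le_dist (X : 'I_n -> vec) i : minsep P X <= dist_set (X i) (eboundary P).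
Proof. apply: (ge_inf (minsep_lb X)); left; by exists i. Qed.

Lemma minsep_le_edist (X : 'I_n -> vec) i j : i != j -> minsep P X <= edist (X i) (X j).
Proof. move=> ij; apply: (ge_inf (minsep_lb X)); right; by exists i, j. Qed.

Let D := [set d | exists X : 'I_n -> vec, (forall i, P (X i)) /\ d = minsep P X].
Let E := [set r : R | 0 <= r /\ Pack_ge r P n].

Lemma D_prop d : D d -> 0 <= d /\ d <= x.
Proof.
move=> [X [PX ->]]; split.
  apply: minsep_ge => [i|i j _]; [exact: dist_ge0 | exact: edist_ge0].
apply: (le_trans (minsep_le_dist X i0)).
apply: hmax; first exact: dist_ge0.
apply: inner_ball; apply: dist_le => //; exact: lexx.
Qed.

Lemma E_prop r : E r -> 0 <= r /\ r <= x.
Proof.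
move=> [r0 [C [hC _]]]; split => //; exact: hmax r0 (hC i0).
Qed.

Lemma D_ne : D !=set0.
Proof. by exists (minsep P (fun _ : 'I_n => c)); exists (fun _ => c); split => // i; exact: Pc. Qed.

Lemma E_ne : E 0.
Proof.
split; first exact: lexx.
exists (fun _ => c); split.
  move=> i z hz; apply: hball; rewrite /cball /= in hz *; have hx0 := ltW hx; lra.
move=> i j _; apply/seteqP; split => // z [h _]; rewrite /oball /= in h.
have := edist_ge0 c z; lra.
Qed.

Lemma stepA r : E r -> 2 * x * r <= sup D * (x + r).
Proof.
move=> Er; have hx0 := hx; have [r0 rx] := E_prop Er.
case: Er => _ [C [hC hdisj]].
pose lam := x / (x + r).
have xr : 0 < x + r by lra.
have lam0 : 0 <= lam by rewrite divr_ge0 // ltW.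
pose F := 2 * x * r / (x + r).
have F0 : 0 <= F by apply: divr_ge0; [apply: mulr_ge0; [apply: mulr_ge0|] | ]; lra.
have eF : (1 - lam) * x + lam * r = F by rewrite /lam /F; field; rewrite gt_eqF.
pose X i := c + lam *: (C i - c).
have inX i : inner (X i) F.
  rewrite -eF; apply: inner_scale => //; apply: ball_inner => //; exact: hC.
have PX i : P (X i) by apply: inner_P; apply: (inner_mono F0 (inX i)).
have hF : F <= minsep P X.
  apply: minsep_ge => [i|i j ij]; first by apply: dist_ge => //.
  rewrite /X edist_scale ger0_norm //.
  have := oball_disj (hdisj i j ij).
  have -> : F = lam * (2 * r) by rewrite /F /lam; field; rewrite gt_eqF.
  by move=> h; apply: ler_wpM2l.
have hD : F <= sup D.
  apply: le_trans hF _; apply: ub_le_sup; last by exists X.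
  by exists x => d /D_prop [].
have : F * (x + r) = 2 * x * r by rewrite /F divfK // gt_eqF.
have := ler_wpM2r (ltW xr) hD.
lra.
Qed.

Lemma stepB d : D d -> d * x <= sup E * (2 * x - d).
Proof.
move=> Dd0; have hx0 := hx; have [d0 dx] := D_prop Dd0.
case: Dd0 => X [PX ed].
have xd : 0 < 2 * x - d by lra.
pose mu := 2 * x / (2 * x - d).
have mu0 : 0 <= mu by apply: divr_ge0; [apply: mulr_ge0|]; lra.
pose g := d * x / (2 * x - d).
have g0 : 0 <= g by apply: divr_ge0; [apply: mulr_ge0|]; lra.
have eg : (1 - mu) * x + mu * d = g by rewrite /mu /g; field; rewrite gt_eqF.
pose C i := c + mu *: (X i - c).
have inX i : inner (X i) d by apply: dist_le => //; rewrite ed; exact: minsep_le_dist.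
have Eg : E g.
  split => //; exists C; split.
    move=> i; apply: inner_ball; rewrite -eg; exact: inner_scale.
  move=> i j ij; apply: disj_oball.
  rewrite /C edist_scale ger0_norm //.
  have -> : 2 * g = mu * d by rewrite /mu /g; field; rewrite gt_eqF.
  by apply: ler_wpM2l => //; rewrite ed; exact: minsep_le_edist.
have hg : g <= sup E.
  apply: ub_le_sup => //.
  by exists x => r /E_prop [].
have : g * (2 * x - d) = d * x by rewrite /g divfK // gt_eqF.
have := ler_wpM2r (ltW xd) hg.
lra.
Qed.

Lemma main_eq : Disp n P = 2 * x * DP n P / (x + DP n P).
Proof.
rewrite /Disp /DP -/D -/E.
have hx0 := hx.
have [sE0 sEx] : 0 <= sup E /\ sup E <= x.
  split.
    by apply: ub_le_sup; [exists x => r /E_prop [] | exact: E_ne].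
  by apply: ge_sup; [exists 0; exact: E_ne | move=> r /E_prop []].
have [sD0 sDx] : 0 <= sup D /\ sup D <= x.
  have [d Dd] := D_ne.
  have [d0 _] := D_prop Dd.
  split.
    apply: le_trans d0 _; apply: ub_le_sup => //; by exists x => e /D_prop [].
  by apply: ge_sup; [exists d | move=> e /D_prop []].
have A : sup E * (2 * x - sup D) <= sup D * x.
  have pos : 0 < 2 * x - sup D by lra.
  rewrite -ler_pdivlMr //.
  apply: ge_sup; first by exists 0; exact: E_ne.
  move=> r Er; rewrite ler_pdivlMr //; have := stepA Er; lra.
have B : sup D * (x + sup E) <= 2 * x * sup E.
  have pos : 0 < x + sup E by lra.
  rewrite -ler_pdivlMr //.
  apply: ge_sup; first exact: D_ne.
  move=> d Dd; rewrite ler_pdivlMr //; have := stepB Dd; have [d0 dx] := D_prop Dd; nra.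
have pos : 0 < x + sup E by lra.
have eq : sup D * (x + sup E) = 2 * x * sup E by lra.
by rewrite -eq mulfK // gt_eqF.
Qed.

End Poly.




Theorem claim3 (R : realType) (k : nat) (P : set 'rV[R]_k) (x : R) :
  (1 <= k)%N -> is_kpolytope P -> has_insphere P x ->
  forall n : nat, (1 <= n)%N ->
    Disp n P = (2 * x * DP n P) / (x + DP n P).
Proof.
move=> hk [[m [a [b hP]]] hbd [y0 [e [e0 he]]]] [c [hball hmax hfac]] n hn.
subst P.
have hx : 0 < x.
  have h2 : 0 <= e / 2 by apply: divr_ge0; lra.
  have := hmax y0 (e / 2) h2.
  have : cball y0 (e / 2) `<=` [set y | forall j, dot (a j) y <= b j].
    move=> z hz; apply: he; rewrite /oball /=; rewrite /cball /= in hz; lra.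
  move=> hsub /(_ hsub); lra.
have hJ := J_exists hx hball hfac hbd hk.
exact: (main_eq hx hball hfac hmax hJ hn).
Qed.
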